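(* Let $\mu$ be a compactly supported Borel probability measure on $\mathbb R^n$, $\alpha\ge0$, $q,t\in\mathbb R$ and $\delta>0$ with $\delta\le\alpha q+t$. Then: (1)(a) if $q\le0$ and $A\subseteq\overline E^\alpha$ is Borel, then $\mathsf P^{\alpha q+t-\delta}(A)\ge2^{\alpha q-\delta}\,\mathsf P^{q,t}_\mu(A)$; (1)(b) if $q\ge0$ and $A\subseteq\underline E_\alpha$ is Borel, then $\mathsf P^{\alpha q+t-\delta}(A)\ge2^{\alpha q-\delta}\,\mathsf P^{q,t}_\mu(A)$; in particular, if $A\subseteq\underline E_\alpha$ is Borel with $\mu(A)>0$, then $\overline\dim_{MB}(A)\ge\alpha$; (2)(a) if $q\le0$ and $A\subseteq\overline E^\alpha$ is Borel, then $\mathsf H^{\alpha q+t-\delta}(A)\ge2^{\alpha q-\delta}\,\mathsf H^{q,t}_\mu(A)$; (2)(b) if $q\ge0$ and $A\subseteq\underline E_\alpha$ is Borel, then $\mathsf H^{\alpha q+t-\delta}(A)\ge2^{\alpha q-\delta}\,\mathsf H^{q,t}_\mu(A)$; in particular, if $A\subseteq\underline E_\alpha$ is Borel with $\mu(A)>0$, then $\underline\dim_{MB}(A)\ge\alpha$.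
   Context: $B(x,r)$ is the closed ball. Multifractal Hewitt–Stromberg measures: for $E\subseteq\mathbb R^n$, $r>0$, $q,t\in\mathbb R$, $N^q_{\mu,r}(E)=\inf\sum_i\mu(B(x_i,r))^q$ over centred coverings $(B(x_i,r))_i$ of $E$ ($x_i\in E$, $E\subseteq\bigcup_iB(x_i,r)$), $M^q_{\mu,r}(E)=\sup\sum_i\mu(B(x_i,r))^q$ over centred packings (pairwise disjoint $B(x_i,r)$, $x_i\in E$); $\mathsf L^{q,t}_\mu(E)=\liminf_{r\to0}N^q_{\mu,r}(E)(2r)^t$, $\mathsf C^{q,t}_\mu(E)=\limsup_{r\to0}M^q_{\mu,r}(E)(2r)^t$; $\overline{\mathsf H}^{q,t}_\mu(E)=\inf\{\sum_i\mathsf L^{q,t}_\mu(E_i):E\subseteq\bigcup_iE_i,E_i\text{ bounded}\}$, $\mathsf H^{q,t}_\mu(E)=\sup_{F\subseteq E}\overline{\mathsf H}^{q,t}_\mu(F)$, $\mathsf P^{q,t}_\mu(E)=\inf\{\sum_i\mathsf C^{q,t}_\mu(E_i):E\subseteq\bigcup_iE_i,E_i\text{ bounded}\}$. Hewitt–Stromberg measures: $N_r(E)$ least number of closed $r$-balls centred in $E$ covering $E$, $M_r(E)$ largest number of points of $E$ with pairwise distances $\ge r$; $\overline{\mathsf H}^s(E)=\liminf_{r\to0}N_r(E)(2r)^s$, $\overline{\mathsf P}^s(E)=\limsup_{r\to0}M_r(E)(2r)^s$, $\mathsf H^s(E)=\inf\{\sum_i\overline{\mathsf H}^s(E_i):E\subseteq\bigcup_iE_i\}$,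 $\mathsf P^s$ analogously; $\underline\dim_{MB}E=\inf\{s\ge0:\mathsf H^s(E)=0\}$, $\overline\dim_{MB}E=\inf\{s\ge0:\mathsf P^s(E)=0\}$. Local dimensions $\underline\alpha_\mu(x)=\liminf_{r\to0}\frac{\log\mu(B(x,r))}{\log r}$, $\overline\alpha_\mu(x)=\limsup_{r\to0}\frac{\log\mu(B(x,r))}{\log r}$; $\overline E^\alpha=\{x\in\operatorname{supp}\mu:\overline\alpha_\mu(x)\le\alpha\}$, $\underline E_\alpha=\{x\in\operatorname{supp}\mu:\underline\alpha_\mu(x)\ge\alpha\}$. *)

(* Defs.v *)
From HB Require Import structures.
From mathcomp Require Import all_boot all_order all_algebra.
From mathcomp Require Import all_classical all_reals all_analysis.
Set Implicit Arguments. Unset Strict Implicit. Unset Printing Implicit Defensive.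
Import Order.TTheory GRing.Theory Num.Theory.
Import numFieldNormedType.Exports.
Local Open Scope classical_set_scope.
Local Open Scope ring_scope.

(* The ambient space R^n is 'rV[R]_n (its canonical matrix topology is the
   Euclidean topology).  As a measurable space we equip it with the Borel
   sigma-algebra, generated by the open sets. *)
Definition Rn (R : realType) (n : nat) : Type :=
  g_sigma_algebraType (@open 'rV[R]_n).

Section Defs.
Variables (R : realType) (n : nat).
Local Notation V := 'rV[R]_n.

Definition edist (x y : V) : R :=
  Num.sqrt (\sum_(i < n) (x ord0 i - y ord0 i) ^+ 2).

Definition cball (x : V) (r : R) : set V := [set y | edist x y <= r].

Definition ebounded (E : set V) : Prop :=
  exists (x0 : V) (c : R), E `<=` cball x0 c.

Definition liminf0 (f : R -> \bar R) : \bar R :=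
  ereal_sup [set ereal_inf [set f r | r in [set r | 0 < r < e]] | e in [set e : R | 0 < e]].
Definition limsup0 (f : R -> \bar R) : \bar R :=
  ereal_inf [set ereal_sup [set f r | r in [set r | 0 < r < e]] | e in [set e : R | 0 < e]].

Definition epow (m : \bar R) (q : R) : \bar R :=
  match m with
  | EFin r => if r == 0 then (if q <= 0 then +oo%E else 0%E) else (r `^ q)%:E
  | +oo%E => if q < 0 then 0%E else +oo%E
  | -oo%E => 0%E
  end.

Variable mu : set V -> \bar R.

Definition supp : set V :=
  [set x | forall U : set V, open U -> U x -> (0 < mu U)%E].

Definition Nq (q r : R) (E : set V) : \bar R :=
  ereal_inf [set z | exists (I : set nat) (c : nat -> V),
                 [/\ (forall i, I i -> E (c i)),
                      E `<=` \bigcup_(i in I) cball (c i) r &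
                      z = \esum_(i in I) epow (mu (cball (c i) r)) q]].

Definition Mq (q r : R) (E : set V) : \bar R :=
  ereal_sup [set z | exists (I : set nat) (c : nat -> V),
                 [/\ (forall i, I i -> E (c i)),
                      (forall i j, I i -> I j -> i <> j ->
                         cball (c i) r `&` cball (c j) r = set0) &
                      z = \esum_(i in I) epow (mu (cball (c i) r)) q]].

Definition Lqt (q t : R) (E : set V) : \bar R :=
  liminf0 (fun r => (Nq q r E * ((2 * r) `^ t)%:E)%E).
Definition Cqt (q t : R) (E : set V) : \bar R :=
  limsup0 (fun r => (Mq q r E * ((2 * r) `^ t)%:E)%E).

Definition Hbarqt (q t : R) (E : set V) : \bar R :=
  ereal_inf [set (\sum_(0 <= i <oo) Lqt q t (F i))%E
            | F in [set F : nat -> set V |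
                 E `<=` \bigcup_i F i /\ forall i, ebounded (F i)]].

Definition Hqt (q t : R) (E : set V) : \bar R :=
  ereal_sup [set Hbarqt q t F | F in [set F | F `<=` E]].

Definition Pqt (q t : R) (E : set V) : \bar R :=
  ereal_inf [set (\sum_(0 <= i <oo) Cqt q t (F i))%E
            | F in [set F : nat -> set V |
                 E `<=` \bigcup_i F i /\ forall i, ebounded (F i)]].

Definition locratio (x : V) (r : R) : \bar R :=
  (ln (fine (mu (cball x r))) / ln r)%:E.

Definition lowlocdim (x : V) : \bar R := liminf0 (locratio x).
Definition uplocdim (x : V) : \bar R := limsup0 (locratio x).

Definition Eup (a : R) : set V := [set x | supp x /\ (uplocdim x <= a%:E)%E].
Definition Elow (a : R) : set V := [set x | supp x /\ (a%:E <= lowlocdim x)%E].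

End Defs.

Section HS.
Variables (R : realType) (n : nat).
Local Notation V := 'rV[R]_n.

Definition Nr (r : R) (E : set V) : \bar R :=
  ereal_inf [set (size s)%:R%:E | s in [set s : seq V |
      (forall x, x \in s -> E x) /\ E `<=` [set y | exists2 x, x \in s & cball x r y]]].

Definition Mr (r : R) (E : set V) : \bar R :=
  ereal_sup [set (size s)%:R%:E | s in [set s : seq V | uniq s /\
      (forall x, x \in s -> E x) /\
      (forall x y, x \in s -> y \in s -> x != y -> r <= edist x y)]].

Definition HSbar (s : R) (E : set V) : \bar R :=
  liminf0 (fun r => (Nr r E * ((2 * r) `^ s)%:E)%E).
Definition PSbar (s : R) (E : set V) : \bar R :=
  limsup0 (fun r => (Mr r E * ((2 * r) `^ s)%:E)%E).

Definition HS (s : R) (E : set V) : \bar R :=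
  ereal_inf [set (\sum_(0 <= i <oo) HSbar s (F i))%E
            | F in [set F : nat -> set V | E `<=` \bigcup_i F i]].
Definition PS (s : R) (E : set V) : \bar R :=
  ereal_inf [set (\sum_(0 <= i <oo) PSbar s (F i))%E
            | F in [set F : nat -> set V | E `<=` \bigcup_i F i]].

Definition lowdimMB (E : set V) : \bar R :=
  ereal_inf [set s%:E | s in [set s : R | 0 <= s /\ HS s E = 0%E]].
Definition updimMB (E : set V) : \bar R :=
  ereal_inf [set s%:E | s in [set s : R | 0 <= s /\ PS s E = 0%E]].

End HS.

(* Main.v *)
Require Import Defs.
From HB Require Import structures.
From mathcomp Require Import all_boot all_order all_algebra.
From mathcomp Require Import all_classical all_reals all_analysis.
Import Order.TTheory GRing.Theory Num.Theory.
Import numFieldNormedType.Exports.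
Local Open Scope classical_set_scope.
Local Open Scope ring_scope.
From mathcomp Require Import ring lra.
Set Implicit Arguments. Unset Strict Implicit.

Section G.
Variables (R : realType) (n : nat).
Lemma cs (a b : 'I_n -> R) :
  (\sum_i a i * b i)^+2 <= (\sum_i a i ^+2) * (\sum_i b i ^+2).
Proof.
set A := \sum_i a i ^+2; set B := \sum_i b i ^+2; set P := \sum_i a i * b i.
have B0 : 0 <= B by rewrite sumr_ge0// => i _; rewrite sqr_ge0.
have [Be0|Bn0] := eqVneq B 0.
  have bi0 i : b i = 0.
    apply/eqP; rewrite -sqrf_eq0; apply/eqP.
    by move/eqP: Be0; rewrite psumr_eq0 => [/allP/(_ i)/=/(_ (mem_index_enum _))/eqP|j _]; rewrite ?sqr_ge0.
  have -> : P = 0 by rewrite /P big1// => i _; rewrite bi0 mulr0.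
  by rewrite expr0n /= mulr_ge0// sumr_ge0// => i _; rewrite sqr_ge0.
have Bp : 0 < B by rewrite lt_neqAle eq_sym Bn0.
pose l := - P / B.
have H : 0 <= \sum_i (a i + l * b i)^+2 by rewrite sumr_ge0// => i _; rewrite sqr_ge0.
have E : \sum_i (a i + l * b i)^+2 = A + 2 * l * P + l^+2 * B.
  rewrite /A /P /B mulr_sumr mulr_sumr -!big_split /=; apply: eq_bigr => i _.
  by rewrite sqrrD; ring.
rewrite E /l in H.
have : 0 <= (A + 2 * (- P / B) * P + (- P / B) ^+ 2 * B) * B by rewrite mulr_ge0// ltW.
have -> : (A + 2 * (- P / B) * P + (- P / B) ^+ 2 * B) * B = A * B - P^+2.
  by field; rewrite Bn0.
by rewrite subr_ge0.
Qed.
Local Notation V := 'rV[R]_n.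
Local Notation ed := (@Defs.edist R n).
Definition S2 (x y : V) := \sum_i (x ord0 i - y ord0 i) ^+ 2.
Lemma S2_ge0 x y : 0 <= S2 x y.
Proof. by rewrite sumr_ge0// => i _; rewrite sqr_ge0. Qed.
Lemma edE x y : ed x y = Num.sqrt (S2 x y). Proof. by []. Qed.
Lemma ed_ge0 x y : 0 <= ed x y. Proof. exact: sqrtr_ge0. Qed.
Lemma edC x y : ed x y = ed y x.
Proof. by rewrite !edE /S2; congr Num.sqrt; apply: eq_bigr => i _; rewrite -sqrrN opprB. Qed.
Lemma ed_self x : ed x x = 0.
Proof. by rewrite edE /S2 big1 ?sqrtr0// => i _; rewrite subrr expr0n. Qed.
Lemma ed_tri x y z : ed x z <= ed x y + ed y z.
Proof.

rewrite !edE.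
have h : S2 x z <= (Num.sqrt (S2 x y) + Num.sqrt (S2 y z)) ^+ 2.
  have -> : S2 x z = \sum_i ((x ord0 i - y ord0 i) + (y ord0 i - z ord0 i)) ^+ 2.
    by apply: eq_bigr => i _; congr (_ ^+ 2); rewrite addrA subrK.
  rewrite sqrrD !sqr_sqrtr ?S2_ge0//.
  under eq_bigr do rewrite sqrrD.
  rewrite !big_split /=.
  rewrite lerD2r lerD2l.
  rewrite -mulr2n ler_pMn2r//.
  apply: (le_trans (ler_norm _)).
  rewrite -sqrtr_sqr -sqrtrM ?S2_ge0// ler_sqrt; last by rewrite mulr_ge0// S2_ge0.
  exact: cs.
by rewrite -(ger0_norm (addr_ge0 (sqrtr_ge0 (S2 x y)) (sqrtr_ge0 (S2 y z)))) -sqrtr_sqr ler_sqrt ?sqr_ge0.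
Qed.

Definition mid (x y : V) : V := 2^-1 *: (x + y).
Lemma ed_mid_l x y : ed x (mid x y) = ed x y / 2.
Proof.
rewrite !edE /S2.
have -> : \sum_i (x ord0 i - mid x y ord0 i) ^+ 2 = 4^-1 * \sum_i (x ord0 i - y ord0 i) ^+ 2.
  by rewrite mulr_sumr; apply: eq_bigr => i _; rewrite !mxE; field.
rewrite sqrtrM ?invr_ge0// mulrC; congr (_ * _).
have -> : (4 : R)^-1 = (2^-1)^+2 by rewrite expr2; field.
by rewrite sqrtr_sqr ger0_norm// invr_ge0.
Qed.
Lemma ed_mid_r x y : ed y (mid x y) = ed x y / 2.
Proof. have -> : mid x y = mid y x by rewrite /mid addrC. by rewrite ed_mid_l edC. Qed.
Lemma ed_ball (x y : V) e : ball x e y -> ed x y <= n.+1%:R * e.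
Proof.
move=> [e0 H].
rewrite edE -(ger0_norm (mulr_ge0 (ler0n _ n.+1) (ltW e0))) -sqrtr_sqr ler_sqrt ?sqr_ge0//.
apply: (@le_trans _ _ (\sum_(i < n) e ^+ 2)).
  apply: ler_sum => i _; move: (H ord0 i); rewrite /ball /= => h.
  have h' : `|x ord0 i - y ord0 i| <= e by apply: ltW.
  have n0 := normr_ge0 (x ord0 i - y ord0 i).
  rewrite -(real_normK (num_real (x ord0 i - y ord0 i))); nra.
have hn : 0 <= n%:R :> R by [].
rewrite sumr_const card_ord -mulr_natl -natr1; nra.
Qed.
End G.

Section M.
Variables (R : realType) (n : nat) (mu : probability (Rn R n) R).
Local Notation V := 'rV[R]_n.
Local Notation ed := (@Defs.edist R n).
Local Notation mu' := (mu : set V -> \bar R).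

Lemma open_meas (U : set V) : open U -> measurable (U : set (Rn R n)).
Proof. by move=> oU; apply: sub_gen_smallest. Qed.

Lemma cball_meas y r : measurable (cball y r : set (Rn R n)).
Proof.
have -> : cball y r = ~` [set w | r < ed y w].
  apply/seteqP; split => w /=.
  - by rewrite /cball/= leNgt => /negP.
  - by move=> /negP; rewrite -leNgt.
apply: measurableC; apply: open_meas; rewrite openE => z /= hz.
rewrite /interior nbhs_ballP; exists ((ed y z - r) / 2 / n.+1%:R).
  by apply: divr_gt0 => //; apply: divr_gt0 => //; rewrite subr_gt0.
move=> w /ed_ball; rewrite mulrC divfK // => h.
have := ed_tri y w z; rewrite (edC w z) => h2.
rewrite /=; lra.
Qed.

Lemma mu_cball_ge0 y r : (0 <= mu' (cball y r))%E.
Proof. exact: measure_ge0. Qed.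

Lemma mu_cball_le1 y r : (mu' (cball y r) <= 1)%E.
Proof. exact: probability_le1 (cball_meas y r). Qed.

Lemma mu_cballE y r : mu' (cball y r) = (fine (mu' (cball y r)))%:E.
Proof.
rewrite fineK//; apply/fin_numP; split.
  by apply/negP => /eqP h; have := mu_cball_ge0 y r; rewrite h.
by apply/negP => /eqP h; have := mu_cball_le1 y r; rewrite h.
Qed.

Lemma fine_mu_ge0 y r : 0 <= fine (mu' (cball y r)).
Proof. by rewrite -lee_fin -mu_cballE mu_cball_ge0. Qed.
Lemma fine_mu_le1 y r : fine (mu' (cball y r)) <= 1.
Proof. by rewrite -lee_fin -mu_cballE mu_cball_le1. Qed.

Lemma supp_pos y r : supp mu' y -> 0 < r -> 0 < fine (mu' (cball y r)).
Proof.
move=> sy r0; rewrite -lte_fin -mu_cballE.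
have hU : (0 < mu' (ball y (r / n.+1%:R)))%E.
  apply: sy; first exact: ball_open.
  exact: ballxx (divr_gt0 r0 _).
apply: (lt_le_trans hU); apply: le_measure; rewrite ?inE.
- exact: open_meas (ball_open _ _).
- exact: cball_meas.
- by move=> w /ed_ball; rewrite mulrC divfK.
Qed.
End M.

Lemma powE (R : realType) (a x : R) : 0 < a -> a `^ x = expR (x * ln a).
Proof. by move=> a0; rewrite /powR gt_eqF. Qed.

Lemma epow_bound (R : realType) (m r q c : R) : 0 < m -> 0 < r ->
  q * ln m <= c * q * ln r -> (epow m%:E q <= (r `^ (c * q))%:E)%E.
Proof.
move=> m0 r0 h; rewrite /epow gt_eqF// lee_fin !powE// ler_expR.
by [].

Qed.

Section D.
Variables (R : realType) (n : nat) (mu : probability (Rn R n) R).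
Local Notation V := 'rV[R]_n.
Local Notation mu' := (mu : set V -> \bar R).

Lemma up_bound (x : V) (a eta : R) : supp mu' x -> (uplocdim mu' x <= a%:E)%E -> 0 < eta ->
  exists2 e, 0 < e & forall r, 0 < r < e -> (a + eta) * ln r <= ln (fine (mu' (cball x r))).
Proof.
move=> sx ha eta0.
have : (uplocdim mu' x < (a + eta)%:E)%E by apply: (le_lt_trans ha); rewrite lte_fin ltrDl.
move=> /ereal_inf_lt [_ [e e0 <-]] hs.
exists (Num.min e 1); first by rewrite lt_min e0 ltr01.
move=> r /andP[r0]; rewrite lt_min => /andP[re r1].
have : ((ln (fine (mu' (cball x r))) / ln r)%:E <= (a + eta)%:E)%E.
  apply: ltW; apply: le_lt_trans hs; apply: ereal_sup_ubound; exists r => //=.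
  by rewrite r0 re.
rewrite lee_fin => h.
have lr : ln r < 0 by apply: ln_lt0; rewrite r0 r1.
set L := ln (fine _) in h *.
have hL : L / ln r * ln r = L by rewrite divfK// lt_eqF.
nra.
Qed.

Lemma low_bound (x : V) (a b : R) : supp mu' x -> (a%:E <= lowlocdim mu' x)%E -> b < a ->
  exists2 e, 0 < e & forall r, 0 < r < e -> ln (fine (mu' (cball x r))) <= b * ln r.
Proof.
move=> sx ha ba.
have : (b%:E < lowlocdim mu' x)%E by apply: (lt_le_trans _ ha); rewrite lte_fin.
move=> /ereal_sup_gt [_ [e e0 <-]] hs.
exists (Num.min e 1); first by rewrite lt_min e0 ltr01.
move=> r /andP[r0]; rewrite lt_min => /andP[re r1].
have : (b%:E <= (ln (fine (mu' (cball x r))) / ln r)%:E)%E.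
  apply: ltW; apply: lt_le_trans hs _; apply: ereal_inf_lbound; exists r => //=.
  by rewrite r0 re.
rewrite lee_fin => h.
have lr : ln r < 0 by apply: ln_lt0; rewrite r0 r1.
set L := ln (fine _) in h *.
have hL : L / ln r * ln r = L by rewrite divfK// lt_eqF.
nra.
Qed.
End D.

From mathcomp Require Import finmap.

Section H.
Variable R : realType.

Lemma fin_ub (x : \bar R) : (x < +oo)%E -> exists2 C : R, 0 < C & (x < C%:E)%E.
Proof.
case: x => [r| |] // _.
- by exists (`|r| + 1); [rewrite ltr_pwDr// | rewrite lte_fin; have := ler_norm r; lra].
- by exists 1 => //; rewrite ltNyr.
Qed.

Lemma thresh (K g e : R) : 0 < K -> 0 < g -> 0 < e ->
  exists2 th, 0 < th & forall x, 0 < x < th -> K * x `^ g <= e.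
Proof.
move=> K0 g0 e0; exists (expR (g^-1 * ln (e / K))); first exact: expR_gt0.
move=> x /andP[x0 xt].
have xt' : ln x < g^-1 * ln (e / K).
  by rewrite -[X in _ < X]expRK ltr_ln ?posrE ?expR_gt0.
rewrite powE// -[X in _ <= X](divfK (lt0r_neq0 K0) e) mulrC ler_pM2r//.
rewrite -[X in _ <= X]lnK ?posrE ?divr_gt0// ler_expR.
have : g * ln x < g * (g^-1 * ln (e / K)) by rewrite ltr_pM2l.
rewrite mulrA mulfV ?gt_eqF// mul1r mulrC => h; exact: ltW.
Qed.

Lemma sum_cst (l : seq nat) (b : R) :
  (\sum_(i <- l) b%:E = ((size l)%:R * b)%:E)%E.
Proof.
elim: l => [|a l IH]; first by rewrite big_nil mul0r.
by rewrite big_cons IH /= -EFinD -natr1 mulrDl mul1r addrC.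
Qed.

Lemma prod_lt (x : \bar R) (p C : R) : 0 < p -> (x * p%:E < C%:E)%E -> (x <= (C / p)%:E)%E.
Proof.
move=> p0; case: x => [m| |] //.
- by rewrite -EFinM !lte_fin lee_fin ler_pdivlMr// => /ltW.
- by rewrite gt0_mulye ?lte_fin.
- by move=> _; rewrite leNye.
Qed.

Lemma esum_le_card (I : set nat) (a : nat -> \bar R) (b K : R) : 0 <= b ->
  (forall i, I i -> (a i <= b%:E)%E) ->
  (forall X, finite_set X -> X `<=` I -> (#|` fset_set X|)%:R <= K) ->
  (esum I a <= (K * b)%:E)%E.
Proof.
move=> b0 hab hK; apply: ge_ereal_sup => _ [X [fX XI] <-].
rewrite fsbig_finite//.
apply: (@le_trans _ _ (\sum_(i <- fset_set X) b%:E)%E).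
  rewrite big_seq [X in (_ <= X)%E]big_seq; apply: lee_sum => i.
  by rewrite in_fset_set// => /set_mem/XI/hab.
by rewrite sum_cst lee_fin ler_wpM2r// hK.
Qed.
End H.

Section C.
Variables (R : realType) (n : nat).
Local Notation V := 'rV[R]_n.
Local Notation ed := (@Defs.edist R n).

Lemma disj_far (x y : V) r : cball x r `&` cball y r = set0 -> 2 * r < ed x y.
Proof.
move=> h; rewrite ltNge; apply/negP => hle.
have : (cball x r `&` cball y r) (mid x y).
  by split; rewrite /cball /= ?ed_mid_l ?ed_mid_r; lra.
by rewrite h.
Qed.

Lemma pack_card (F G : set V) (r : R) (I : set nat) (c : nat -> V) (X : set nat) :
  0 < r -> G `<=` F -> (forall i, I i -> G (c i)) ->
  (forall i j, I i -> I j -> i <> j -> cball (c i) r `&` cball (c j) r = set0) ->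
  finite_set X -> X `<=` I ->
  (((#|` fset_set X|)%:R)%:E <= Mr r F)%E.
Proof.
move=> r0 GF cG disj fX XI.
have memX i : i \in fset_set X -> I i by rewrite in_fset_set// => /set_mem/XI.
have inj : {in fset_set X &, injective c}.
  move=> i j /memX Ii /memX Ij cij; apply: contrapT => nij.
  have := disj_far (disj i j Ii Ij nij); rewrite cij ed_self; lra.
apply: ereal_sup_ubound; exists [seq c i | i <- fset_set X]; last by rewrite size_map.
split; first by rewrite map_inj_in_uniq// fset_uniq.
split.
  by move=> x /mapP[i /memX Ii ->]; apply/GF/cG.
move=> x y /mapP[i /memX Ii ->] /mapP[j /memX Ij ->] nxy.
have nij : i <> j by move=> eij; move: nxy; rewrite eij eqxx.
have := disj_far (disj i j Ii Ij nij); lra.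
Qed.

Lemma cover_build (F G : set V) (r : R) (s : seq V) :
  G `<=` F -> F `<=` [set y | exists2 x, x \in s & cball x r y] ->
  exists I : set nat, exists c : nat -> V,
   [/\ (forall i, I i -> G (c i)), G `<=` \bigcup_(i in I) cball (c i) (2 * r)
     & (forall i, I i -> (i < size s)%N)].
Proof.
move=> GF Fs.
pose P i := [set y | G y /\ cball (nth 0 s i) r y].
exists [set i | (i < size s)%N /\ exists y, P i y], (fun i => xget 0 (P i)).
split.
- by move=> i [_ [y Py]]; have [] := xgetI 0 Py.
- move=> z Gz; have [x xs hx] := Fs z (GF z Gz).
  have Pz : P (index x s) z by split; rewrite /= ?nth_index.
  exists (index x s); first by split; [rewrite index_mem | exists z].
  have [_ hw] := xgetI 0 Pz.
  rewrite /cball /= in hw hx *; rewrite (nth_index 0 xs) in hw.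
  have := ed_tri (xget 0 (P (index x s))) x z; rewrite edC in hw; lra.
- by move=> i [].
Qed.
End C.

Lemma pow_id (R : realType) (a b x C s t be : R) : 0 < a -> 0 < b -> 0 < x ->
  C / (a * x) `^ s * x `^ be * (b * x) `^ t = C * (a `^ (- s) * b `^ t) * x `^ (be + t - s).
Proof.
move=> a0 b0 x0; rewrite !powE ?mulr_gt0// !lnM ?posrE//.
rewrite -expRN -!mulrA -!expRD; congr (C * expR _); ring.
Qed.

Lemma prod_lt' (R : realType) (x : \bar R) (p C : R) : 0 < p -> (x * p%:E < C%:E)%E -> (x < (C / p)%:E)%E.
Proof.
move=> p0; case: x => [m| |] //.
- by rewrite -EFinM !lte_fin ltr_pdivlMr.
- by rewrite gt0_mulye ?lte_fin.
- by move=> _; rewrite ltNyr.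
Qed.

Lemma epow_ge0 (R : realType) (m : \bar R) q : (0 <= epow m q)%E.
Proof.
case: m => [r| |] /=.
- case: ifP => _; first by case: ifP.
  by rewrite lee_fin powR_ge0.
- by case: ifP.
- by [].
Qed.

Section Core.
Variables (R : realType) (n : nat) (mu : probability (Rn R n) R).
Local Notation V := 'rV[R]_n.
Local Notation mu' := (mu : set V -> \bar R).

Lemma CP (q t s be rho0 : R) (F G : set V) :
  G `<=` F -> 0 < rho0 ->
  (forall y r, G y -> 0 < r < rho0 -> (epow (mu' (cball y r)) q <= (r `^ be)%:E)%E) ->
  (PSbar s F < +oo)%E -> 0 < be + t - s -> (Cqt mu' q t G <= 0)%E.
Proof.
move=> GF r0 hb hP hgam.
move: hP; rewrite /PSbar /limsup0 => /ereal_inf_lt [_ [e1 e10 <-]] /fin_ub [C C0 hC].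
have hg1 rho : 0 < rho < e1 -> (Mr rho F * ((2 * rho) `^ s)%:E < C%:E)%E.
  by move=> h; apply: le_lt_trans hC; apply: ereal_sup_ubound; exists rho.
apply/lee_addgt0Pr => eps eps0; rewrite add0e.
have K0 : 0 < C * (2 `^ (- s) * 2 `^ t) by rewrite mulr_gt0// mulr_gt0// powR_gt0.
have [th th0 hth] := thresh K0 hgam eps0.
pose es := Num.min e1 (Num.min rho0 th).
have es0 : 0 < es by rewrite !lt_min e10 r0 th0.
apply: ge_ereal_inf; exists (ereal_sup [set (Mq mu' q r G * ((2 * r) `^ t)%:E)%E | r in [set r | 0 < r < es]]).
  by exists es.
apply: ge_ereal_sup => _ [r /andP[rp] res <-].
move: res; rewrite !lt_min => /andP[re1 /andP[rr0 rth]].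
have hM : (Mq mu' q r G <= ((C / (2 * r) `^ s) * r `^ be)%:E)%E.
  apply: ge_ereal_sup => _ [I [c [cG disj ->]]].
  apply: esum_le_card; first exact: powR_ge0.
    by move=> i Ii; apply: hb; [exact: cG | rewrite rp rr0].
  move=> X fX XI.
  have := pack_card rp GF cG disj fX XI.
  move=> /le_trans/(_ (prod_lt _ (hg1 r _))); rewrite lee_fin; apply.
    by rewrite powR_gt0// mulr_gt0.
  by rewrite rp re1.
apply: le_trans (lee_wpmul2r _ hM) _; first by rewrite lee_fin powR_ge0.
rewrite -EFinM lee_fin pow_id//.
by apply: hth; rewrite rp rth.
Qed.

Lemma CH (q t s be rho0 : R) (F G : set V) :
  G `<=` F -> 0 < rho0 ->
  (forall y r, G y -> 0 < r < rho0 -> (epow (mu' (cball y r)) q <= (r `^ be)%:E)%E) ->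
  (HSbar s F < +oo)%E -> 0 < be + t - s -> (Lqt mu' q t G <= 0)%E.
Proof.
move=> GF r0 hb /fin_ub [C C0 hC] hgam.
have hg1 (e : R) : 0 < e -> (ereal_inf [set (Defs.Nr r F * ((2 * r)%R `^ s)%:E)%E | r in [set r : R | (0 < r < e)%R]] < C%:E)%E.
  by move=> e0; apply: le_lt_trans hC; apply: ereal_sup_ubound; exists e.
apply/lee_addgt0Pr => eps eps0; rewrite add0e.
have K0 : 0 < C * (1 `^ (- s) * 2 `^ t) by rewrite mulr_gt0// mulr_gt0// powR_gt0.
have [th th0 hth] := thresh K0 hgam eps0.
apply: ge_ereal_sup => _ [e e0 <-].
pose es := Num.min (e / 2) (Num.min (rho0 / 2) (th / 2)).
have es0 : 0 < es by rewrite !lt_min !divr_gt0.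
have [_ [rho /andP[rhop rhoe] <-] hrho] := ereal_inf_lt (hg1 es es0).
move: rhoe; rewrite !lt_min => /andP[rhoe /andP[rhor0 rhoth]].
have h2r : 0 < (2 * rho) `^ s by apply: powR_gt0; rewrite mulr_gt0.
have [_ [s0 [s0F Fs0] <-] hs0] := ereal_inf_lt (prod_lt' h2r hrho).
have [I [c [cG Gcov Ilt]]] := cover_build GF Fs0.
apply: ge_ereal_inf; exists (Nq mu' q (2 * rho) G * ((2 * (2 * rho)) `^ t)%:E)%E.
  by exists (2 * rho) => //; apply/andP; split; lra.
have hN : (Nq mu' q (2 * rho) G <= ((size s0)%:R * (2 * rho) `^ be)%:E)%E.
  apply: (@le_trans _ _ (\esum_(i in I) epow (mu' (cball (c i) (2 * rho))) q)%E).
    by apply: ereal_inf_lbound; exists I, c; split.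
  apply: esum_le_card; first exact: powR_ge0.
    by move=> i Ii; apply: hb; [exact: cG | apply/andP; split; lra].
  move=> X fX XI; rewrite ler_nat.
  rewrite -(size_iota 0 (size s0)); apply: uniq_leq_size; first exact: fset_uniq.
  move=> i; rewrite in_fset_set// => /set_mem/XI/Ilt.
  by rewrite mem_iota.
apply: le_trans (lee_wpmul2r _ hN) _; first by rewrite lee_fin powR_ge0.
rewrite -EFinM lee_fin.
apply: (@le_trans _ _ (C / (1 * (2 * rho)) `^ s * (2 * rho) `^ be * (2 * (2 * rho)) `^ t)).
  rewrite mul1r ler_wpM2r ?powR_ge0// ler_wpM2r ?powR_ge0//.
  by rewrite lte_fin in hs0; exact: ltW.
rewrite pow_id//; last by rewrite mulr_gt0.
by apply: hth; apply/andP; split; lra.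
Qed.
End Core.

Lemma term_le_series (R : realType) (u : nat -> \bar R) i :
  (forall k, (0 <= u k)%E) -> (u i <= \sum_(0 <= k <oo) u k)%E.
Proof.
move=> u0; apply: le_trans (nneseries_lim_ge i.+1 (fun k _ _ => u0 k)).
rewrite big_nat_recr//= leeDr// sume_ge0// => k _; exact: u0.
Qed.

Lemma liminf0_ge0 (R : realType) (f : R -> \bar R) :
  (forall r, 0 < r -> (0 <= f r)%E) -> (0 <= liminf0 f)%E.
Proof.
move=> f0.
have h : (0 <= ereal_inf [set f r | r in [set r : R | (0 < r < 1)%R]])%E.
  by apply: le_ereal_inf_tmp => _ [r /andP[r0 _] <-]; exact: f0.
apply: le_trans h _; rewrite /liminf0; apply: ereal_sup_ubound.
by exists 1 => //=; exact: ltr01.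
Qed.

Lemma limsup0_ge0 (R : realType) (f : R -> \bar R) :
  (forall r, 0 < r -> (0 <= f r)%E) -> (0 <= limsup0 f)%E.
Proof.
move=> f0; rewrite /limsup0; apply: le_ereal_inf_tmp => _ [e e0 <-].
have e1 : 0 < e := e0.
apply: le_trans (f0 (e / 2) _) _; first by rewrite divr_gt0.
apply: ereal_sup_ubound; exists (e / 2) => //; apply/andP; split; lra.
Qed.

Section NN.
Variables (R : realType) (n : nat) (mu : probability (Rn R n) R).
Local Notation V := 'rV[R]_n.
Local Notation mu' := (mu : set V -> \bar R).

Lemma Nq_ge0 q r (E : set V) : (0 <= Nq mu' q r E)%E.
Proof.
apply: le_ereal_inf_tmp => _ [I [c [_ _ ->]]].
by apply: esum_ge0 => i _; exact: epow_ge0.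
Qed.

Lemma Mq_ge0 q r (E : set V) : (0 <= Mq mu' q r E)%E.
Proof.
apply: ereal_sup_ubound; exists set0, (fun=> 0); split => //; last by rewrite esum_set0.
Qed.

Lemma Lqt_ge0 q t (E : set V) : (0 <= Lqt mu' q t E)%E.
Proof. by apply: liminf0_ge0 => r r0; rewrite mule_ge0// ?Nq_ge0// lee_fin powR_ge0. Qed.

Lemma Cqt_ge0 q t (E : set V) : (0 <= Cqt mu' q t E)%E.
Proof. by apply: limsup0_ge0 => r r0; rewrite mule_ge0// ?Mq_ge0// lee_fin powR_ge0. Qed.

Lemma Nr_ge0 r (E : set V) : (0 <= Defs.Nr r E)%E.
Proof. by apply: le_ereal_inf_tmp => _ [s _ <-]; rewrite lee_fin. Qed.

Lemma Mr_ge0 r (E : set V) : (0 <= Mr r E)%E.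
Proof. by apply: ereal_sup_ubound; exists [::]. Qed.

Lemma HSbar_ge0 s (E : set V) : (0 <= HSbar s E)%E.
Proof. by apply: liminf0_ge0 => r r0; rewrite mule_ge0// ?Nr_ge0// lee_fin powR_ge0. Qed.

Lemma PSbar_ge0 s (E : set V) : (0 <= PSbar s E)%E.
Proof. by apply: limsup0_ge0 => r r0; rewrite mule_ge0// ?Mr_ge0// lee_fin powR_ge0. Qed.

Lemma HS_ge0 s (E : set V) : (0 <= HS s E)%E.
Proof. by apply: le_ereal_inf_tmp => _ [F _ <-]; apply: nneseries_ge0 => k _ _; exact: HSbar_ge0. Qed.

Lemma PS_ge0 s (E : set V) : (0 <= PS s E)%E.
Proof. by apply: le_ereal_inf_tmp => _ [F _ <-]; apply: nneseries_ge0 => k _ _; exact: PSbar_ge0. Qed.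
End NN.

Definition trip (j : nat) : nat * (nat * nat) := odflt (0, (0, 0))%N (@choice.unpickle (nat * (nat * nat))%type j).
Lemma tripK p : trip (choice.pickle p) = p. Proof. by rewrite /trip choice.pickleK. Qed.

Section A.
Variables (R : realType) (n : nat) (mu : probability (Rn R n) R).
Local Notation V := 'rV[R]_n.
Local Notation mu' := (mu : set V -> \bar R).
Local Notation ed := (@Defs.edist R n).

Lemma in_some_ball (x : V) : exists m : nat, cball 0 m%:R x.
Proof.
exists (Num.trunc (ed 0 x)).+1; rewrite /cball /=; apply: ltW; exact: truncnS_gt.
Qed.

Lemma AH q t s be (A : set V) (Gk : nat -> set V) (rho : nat -> R) :
  (forall k, 0 < rho k) ->
  (forall k y r, Gk k y -> 0 < r < rho k -> (epow (mu' (cball y r)) q <= (r `^ be)%:E)%E) ->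
  A `<=` \bigcup_k Gk k -> 0 < be + t - s -> (HS s A < +oo)%E -> (Hqt mu' q t A <= 0)%E.
Proof.
move=> rho0 hb AG hgam hHS.
apply: ge_ereal_sup => _ [F0 F0A <-].
move: hHS => /ereal_inf_lt [_ [Fc AFc <-] hFc].
have hFi i : (HSbar s (Fc i) < +oo)%E.
  by apply: le_lt_trans (term_le_series _ _) hFc => k; exact: HSbar_ge0.
pose H j := let: (i, (k, m)) := trip j in Fc i `&` F0 `&` Gk k `&` cball 0 m%:R.
apply: ge_ereal_inf; exists (\sum_(0 <= j <oo) Lqt mu' q t (H j))%E.
  exists H => //; split.
  - move=> x F0x; have [i _ Fix] := AFc x (F0A x F0x); have [k _ Gkx] := AG x (F0A x F0x).
    have [m hm] := in_some_ball x.
    by exists (choice.pickle (i, (k, m))) => //; rewrite /H tripK.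
  - move=> j; rewrite /H; case: (trip j) => i [k m]; exists 0, m%:R => y [] //.
rewrite eseries0// => j _ _; apply/eqP; rewrite eq_le Lqt_ge0 andbT.
rewrite /H; case: (trip j) => i [k m].
apply: (@CH _ _ mu q t s be (rho k) (Fc i)) => //.
- by move=> y [[[]]].
- by move=> y r [[[_ _] Gy] _]; apply: hb.
Qed.

Lemma AP q t s be (A : set V) (Gk : nat -> set V) (rho : nat -> R) :
  (forall k, 0 < rho k) ->
  (forall k y r, Gk k y -> 0 < r < rho k -> (epow (mu' (cball y r)) q <= (r `^ be)%:E)%E) ->
  A `<=` \bigcup_k Gk k -> 0 < be + t - s -> (PS s A < +oo)%E -> (Pqt mu' q t A <= 0)%E.
Proof.
move=> rho0 hb AG hgam hPS.
move: hPS => /ereal_inf_lt [_ [Fc AFc <-] hFc].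
have hFi i : (PSbar s (Fc i) < +oo)%E.
  by apply: le_lt_trans (term_le_series _ _) hFc => k; exact: PSbar_ge0.
pose H j := let: (i, (k, m)) := trip j in Fc i `&` A `&` Gk k `&` cball 0 m%:R.
apply: ge_ereal_inf; exists (\sum_(0 <= j <oo) Cqt mu' q t (H j))%E.
  exists H => //; split.
  - move=> x Ax; have [i _ Fix] := AFc x Ax; have [k _ Gkx] := AG x Ax.
    have [m hm] := in_some_ball x.
    by exists (choice.pickle (i, (k, m))) => //; rewrite /H tripK.
  - move=> j; rewrite /H; case: (trip j) => i [k m]; exists 0, m%:R => y [] //.
rewrite eseries0// => j _ _; apply/eqP; rewrite eq_le Cqt_ge0 andbT.
rewrite /H; case: (trip j) => i [k m].
apply: (@CP _ _ mu q t s be (rho k) (Fc i)) => //.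
- by move=> y [[[]]].
- by move=> y r [[[_ _] Gy] _]; apply: hb.
Qed.
End A.

Lemma small_inv (R : realType) (e : R) : 0 < e -> exists k : nat, (k.+1%:R)^-1 < e.
Proof.
move=> e0; exists (Num.trunc (e^-1)); rewrite invf_plt ?posrE//; exact: truncnS_gt.
Qed.

Section F.
Variables (R : realType) (n : nat) (mu : probability (Rn R n) R).
Local Notation V := 'rV[R]_n.
Local Notation mu' := (mu : set V -> \bar R).

Definition GK q be (k : nat) : set V :=
  [set y | forall r : R, 0 < r < (k.+1%:R)^-1 -> (epow (mu' (cball y r)) q <= (r `^ be)%:E)%E].

Lemma up_family q a eta (A : set V) : q <= 0 -> 0 < eta -> A `<=` Eup mu' a ->
  A `<=` \bigcup_k GK q ((a + eta) * q) k.
Proof.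
move=> q0 eta0 AE x /AE [sx hx].
have [e e0 he] := up_bound sx hx eta0.
have [k hk] := small_inv e0.
exists k => // r /andP[r0 rk].
have re : r < e by apply: lt_trans hk.
rewrite mu_cballE; apply: epow_bound => //; first exact: supp_pos.
have := he r; rewrite r0 re => /(_ isT) h.
nra.
Qed.

Lemma low_family q a eta (A : set V) : 0 <= q -> 0 < eta -> A `<=` Elow mu' a ->
  A `<=` \bigcup_k GK q ((a - eta) * q) k.
Proof.
move=> q0 eta0 AE x /AE [sx hx].
have hab : a - eta < a by lra.
have [e e0 he] := low_bound sx hx hab.
have [k hk] := small_inv e0.
exists k => // r /andP[r0 rk].
have re : r < e by apply: lt_trans hk.
rewrite mu_cballE; apply: epow_bound => //; first exact: supp_pos.
have := he r; rewrite r0 re => /(_ isT) h.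
nra.
Qed.

Lemma H_ineq c q t s be (A : set V) : 0 <= c ->
  A `<=` \bigcup_k GK q be k -> 0 < be + t - s ->
  (c%:E * Hqt mu' q t A <= HS s A)%E.
Proof.
move=> c0 AG hg.
have := leey (HS s A); rewrite le_eqVlt => /orP[/eqP->|hfin]; first exact: leey.
apply: le_trans (HS_ge0 _ _); apply: mule_ge0_le0; first by rewrite lee_fin.
apply: (@AH _ _ mu q t s be A (GK q be) (fun k => (k.+1%:R)^-1)) => //.
by move=> k y r; apply.
Qed.

Lemma P_ineq c q t s be (A : set V) : 0 <= c ->
  A `<=` \bigcup_k GK q be k -> 0 < be + t - s ->
  (c%:E * Pqt mu' q t A <= PS s A)%E.
Proof.
move=> c0 AG hg.
have := leey (PS s A); rewrite le_eqVlt => /orP[/eqP->|hfin]; first exact: leey.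
apply: le_trans (PS_ge0 _ _); apply: mule_ge0_le0; first by rewrite lee_fin.
apply: (@AP _ _ mu q t s be A (GK q be) (fun k => (k.+1%:R)^-1)) => //.
by move=> k y r; apply.
Qed.
End F.

Section N.
Variables (R : realType) (n : nat) (mu : probability (Rn R n) R).
Local Notation V := 'rV[R]_n.
Local Notation mu' := (mu : set V -> \bar R).

Lemma small_piece (s s' rho0 : R) (F G : set V) (C eps : R) : s < s' -> 0 < rho0 -> 0 < C -> 0 < eps ->
  (forall y r, G y -> 0 < r < rho0 -> fine (mu' (cball y r)) <= r `^ s') ->
  (HSbar s F < C%:E)%E -> G `<=` F ->
  exists U : set V, [/\ measurable (U : set (Rn R n)), G `<=` U & (mu' U <= eps%:E)%E].
Proof.
move=> ss' r0 C0 eps0 hb hC GF.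
have hg1 (e : R) : 0 < e -> (ereal_inf [set (Defs.Nr r F * ((2 * r)%R `^ s)%:E)%E | r in [set r : R | (0 < r < e)%R]] < C%:E)%E.
  by move=> e0; apply: le_lt_trans hC; apply: ereal_sup_ubound; exists e.
have ss0 : 0 < s' - s by rewrite subr_gt0.
have [th th0 hth] := thresh C0 ss0 eps0.
pose es := Num.min (rho0 / 2) (th / 2).
have es0 : 0 < es by rewrite !lt_min !divr_gt0.
have [_ [rho /andP[rhop rhoe] <-] hrho] := ereal_inf_lt (hg1 es es0).
move: rhoe; rewrite !lt_min => /andP[rhor0 rhoth].
have h2r : 0 < (2 * rho) `^ s by apply: powR_gt0; rewrite mulr_gt0.
have [_ [s0 [s0F Fs0] <-] hs0] := ereal_inf_lt (prod_lt' h2r hrho).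
have [I [c [cG Gcov Ilt]]] := cover_build GF Fs0.
pose B j := [set z | I j /\ cball (c j) (2 * rho) z].
have mB j : measurable (B j : set (Rn R n)).
  have [Ij|nIj] := pselect (I j).
    suff -> : B j = cball (c j) (2 * rho) by exact: cball_meas.
    by apply/seteqP; split => z //= [].
  suff -> : B j = set0 by exact: measurable0.
  by apply/seteqP; split => z //= [].
exists (\bigcup_j B j); split.
- exact: (bigcupT_measurable (B : (set (Rn R n))^nat) mB).
- move=> z Gz; have [j Ij hj] := Gcov z Gz; exists j => //.
- have := measure_sigma_subadditive mu (A:=\bigcup_j B j) (F:=B) mB (bigcupT_measurable (B : (set (Rn R n))^nat) mB) (@subset_refl _ (\bigcup_j B j)).
  move/le_trans; apply.
  rewrite (nneseries_split 0 (size s0)); last by move=> k _; exact: measure_ge0.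
  rewrite [X in (_ + X)%E]eseries0 ?adde0; last first.
    move=> j hj _; suff -> : B j = set0 by exact: measure0.
    by apply/seteqP; split => z //= [/Ilt hlt _]; move: hj; rewrite /= leqNgt hlt.
  apply: (@le_trans _ _ (\sum_(0 <= j < 0 + size s0) ((2 * rho) `^ s')%:E)%E).
    apply: lee_sum => j _.
    have [Ij|nIj] := pselect (I j).
      have -> : B j = cball (c j) (2 * rho) by apply/seteqP; split => z //= [].
      change (mu' (cball (c j) (2 * rho)) <= ((2 * rho) `^ s')%:E)%E.
      rewrite mu_cballE lee_fin; apply: hb; first exact: cG.
      by apply/andP; split; lra.
    have -> : B j = set0 by apply/seteqP; split => z //= [].
    by rewrite measure0 lee_fin powR_ge0.
  rewrite sum_cst size_iota lee_fin.
  apply: (@le_trans _ _ (C / (1 * (2 * rho)) `^ s * (2 * rho) `^ s' * (1 * (2 * rho)) `^ 0)).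
    rewrite powRr0 mulr1 mul1r ler_wpM2r ?powR_ge0// add0n.
    by rewrite subn0; rewrite lte_fin in hs0; exact: ltW.
  rewrite pow_id//; last by rewrite mulr_gt0.
  rewrite !powR1 mulr1 addr0 mulr1; apply: hth; apply/andP; split; rewrite ?mulr_gt0//; lra.
Qed.
End N.

Section N2.
Variables (R : realType) (n : nat) (mu : probability (Rn R n) R).
Local Notation V := 'rV[R]_n.
Local Notation mu' := (mu : set V -> \bar R).

Lemma null_piece (s s' rho0 : R) (F G : set V) : s < s' -> 0 < rho0 ->
  (forall y r, G y -> 0 < r < rho0 -> fine (mu' (cball y r)) <= r `^ s') ->
  (HSbar s F < +oo)%E -> G `<=` F ->
  exists N : set V, [/\ measurable (N : set (Rn R n)), G `<=` N & mu' N = 0%E].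
Proof.
move=> ss' r0 hb /fin_ub [C C0 hC] GF.
have step (m : nat) : exists U : set V,
    [/\ measurable (U : set (Rn R n)), G `<=` U & (mu' U <= ((m.+1%:R)^-1)%:E)%E].
  by apply: (small_piece (mu:=mu) ss' r0 C0 _ hb hC GF); rewrite invr_gt0.
have [U hU] := choice step.
have mU m : measurable (U m : set (Rn R n)) by case: (hU m).
exists (\bigcap_m U m); split.
- exact: (@bigcapT_measurable _ (Rn R n) U mU).
- by move=> x Gx m _; case: (hU m) => _ /(_ x Gx).
- apply/eqP; rewrite eq_le measure_ge0 andbT; apply/lee_addgt0Pr => e e0; rewrite add0e.
  have [m hm] := small_inv e0.
  apply: (@le_trans _ _ (mu' (U m))).
    apply: (le_measure mu).
    + by apply/mem_set; exact: (@bigcapT_measurable _ (Rn R n) U mU).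
    + by apply/mem_set; exact: mU.
    + by move=> x; apply.
  case: (hU m) => _ _ /le_trans; apply; rewrite lee_fin; exact: ltW.
Qed.

Lemma low_null s a (A : set V) : s < a -> measurable (A : set (Rn R n)) ->
  A `<=` Elow mu' a -> HS s A = 0%E -> mu' A = 0%E.
Proof.
move=> sa mA AE hHS.
pose s' := (s + a) / 2.
have ss' : s < s' by rewrite /s'; lra.
have s'a : s' < a by rewrite /s'; lra.
pose Gk (k : nat) := [set y : V | forall r, 0 < r < (k.+1%:R)^-1 -> fine (mu' (cball y r)) <= r `^ s'].
have AG : A `<=` \bigcup_k Gk k.
  move=> x /AE [sx hx].
  have [e e0 he] := low_bound sx hx s'a.
  have [k hk] := small_inv e0.
  exists k => // r /andP[r0 rk].
  have re : r < e by apply: lt_trans hk.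
  have := he r; rewrite r0 re => /(_ isT) h.
  rewrite -[X in X <= _]lnK ?posrE; last exact: supp_pos.
  by rewrite powE// ler_expR.
have : (HS s A < 1%:E)%E by rewrite hHS lte_fin ltr01.
move=> /ereal_inf_lt [_ [Fc AFc <-] hFc].
have hFi i : (HSbar s (Fc i) < +oo)%E.
  by apply: le_lt_trans (term_le_series _ _) (lt_trans hFc (ltry 1)) => k; exact: HSbar_ge0.
have piece (p : nat * nat) : exists N : set V,
    [/\ measurable (N : set (Rn R n)), Fc p.1 `&` Gk p.2 `<=` N & mu' N = 0%E].
  apply: (null_piece (rho0 := (p.2.+1%:R)^-1) ss') => //.
  by move=> y r [_ Gy]; apply: Gy.
have [Np hNp] := choice piece.
pose Nj j := Np ((trip j).1, (trip j).2.1).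
have mN j : measurable (Nj j : set (Rn R n)) by case: (hNp ((trip j).1, (trip j).2.1)).
have cov : A `<=` \bigcup_j Nj j.
  move=> x Ax; have [i _ Fix] := AFc x Ax; have [k _ Gkx] := AG x Ax.
  exists (choice.pickle (i, (k, 0%N))) => //; rewrite /Nj tripK /=.
  by case: (hNp (i, k)) => _ sub _; apply: sub.
have := measure_sigma_subadditive mu (A:=A) (F:=Nj) mN mA cov.
rewrite eseries0; last by move=> j _ _; case: (hNp ((trip j).1, (trip j).2.1)).
by move=> h; apply/eqP; rewrite eq_le h measure_ge0.
Qed.

Lemma lowdim_ge a (A : set V) : measurable (A : set (Rn R n)) ->
  A `<=` Elow mu' a -> (0 < mu' A)%E -> (a%:E <= lowdimMB A)%E.
Proof.
move=> mA AE hA; apply: le_ereal_inf_tmp => _ [s [s0 hs] <-].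
rewrite lee_fin leNgt; apply/negP => sa.
by move: hA; rewrite (low_null sa mA AE hs) ltxx.
Qed.
End N2.

Lemma liminf_le_limsup (R : realType) (f g : R -> \bar R) :
  (forall r, 0 < r -> (f r <= g r)%E) -> (liminf0 f <= limsup0 g)%E.
Proof.
move=> fg; apply: ge_ereal_sup => _ [e e0 <-]; apply: le_ereal_inf_tmp => _ [e' e0' <-].
have e1 : 0 < e := e0. have e1' : 0 < e' := e0'.
pose r := Num.min e e' / 2.
have r0 : 0 < r by rewrite divr_gt0// lt_min e1 e1'.
have hm1 : Num.min e e' <= e by rewrite ge_min lexx.
have hm2 : Num.min e e' <= e' by rewrite ge_min lexx orbT.
have hm0 : 0 < Num.min e e' by rewrite lt_min e1 e1'.
have hre : r < e by rewrite /r; lra.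
have hre' : r < e' by rewrite /r; lra.
apply: (@le_trans _ _ (f r)).
  by apply: ereal_inf_lbound; exists r => //; apply/andP; split.
apply: le_trans (fg r r0) _.
by apply: ereal_sup_ubound; exists r => //; apply/andP; split.
Qed.

Section P12.
Variables (R : realType) (n : nat) (mu : probability (Rn R n) R).
Local Notation V := 'rV[R]_n.
Local Notation mu' := (mu : set V -> \bar R).
Local Notation ed := (@Defs.edist R n).

Definition sep (r : R) (E : set V) (s : seq V) := uniq s /\ (forall x, x \in s -> E x) /\ (forall x y, x \in s -> y \in s -> x != y -> r <= ed x y).

Lemma Nr_le_Mr r (E : set V) : 0 < r -> (Defs.Nr r E <= Mr r E)%E.
Proof.
move=> r0.
have := leey (Mr r E); rewrite le_eqVlt => /orP[/eqP->|]; first exact: leey.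
move=> /fin_ub [C C0 hC].
have bnd s : sep r E s -> (size s)%:R < C.
  move=> hs; rewrite -lte_fin; apply: le_lt_trans hC.
  by apply: ereal_sup_ubound; exists s.
have [s [hs smax]] : exists s, sep r E s /\ forall s', sep r E s' -> (size s' <= size s)%N.
  apply: contrapT => hno.
  have grow k : exists s, sep r E s /\ (k <= size s)%N.
    elim: k => [|k [s [hs hk]]]; first by exists [::]; split => //; split => //.
    have : ~ (forall s', sep r E s' -> (size s' <= size s)%N) by move=> h; apply: hno; exists s.
    move=> /existsNP [s' /not_implyP [hs' /negP]]; rewrite -ltnNge => hlt.
    by exists s'; split => //; apply: leq_trans hlt.
  have [s [hs hk]] := grow (Num.trunc C).+1.
  have := bnd s hs; have := truncnS_gt C.
  move: hk; rewrite -(ler_nat R) => hk; lra.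
apply: (@le_trans _ _ ((size s)%:R%:E)%E); last by apply: ereal_sup_ubound; exists s.
apply: ereal_inf_lbound; exists s => //; split; first by case: hs => _ [].
move=> z Ez; apply: contrapT => hz.
have far x : x \in s -> r < ed x z.
  by move=> xs; rewrite ltNge; apply/negP => h; apply: hz; exists x.
have zs : z \notin s by apply/negP => /far; rewrite ed_self; lra.
have : sep r E (z :: s).
  case: hs => us [sE ssep]; split; first by rewrite /= zs us.
  split.
    by move=> x; rewrite inE => /orP[/eqP->|/sE].
  move=> x y; rewrite !inE => /orP[/eqP->|xs] /orP[/eqP->|ys] nxy.
  - by rewrite eqxx in nxy.
  - by rewrite edC; apply: ltW; apply: far.
  - by apply: ltW; apply: far.
  - exact: ssep.
by move=> /smax /=; rewrite ltnn.
Qed.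

Lemma HSbar_le_PSbar s (E : set V) : (HSbar s E <= PSbar s E)%E.
Proof.
apply: liminf_le_limsup => r r0; apply: lee_wpmul2r; first by rewrite lee_fin powR_ge0.
exact: Nr_le_Mr.
Qed.

Lemma HS_le_PS s (E : set V) : (HS s E <= PS s E)%E.
Proof.
apply: le_ereal_inf_tmp => _ [F hF <-].
apply: (@le_trans _ _ (\sum_(0 <= i <oo) HSbar s (F i))%E).
  by apply: ereal_inf_lbound; exists F.
apply: lee_nneseries => [i _ _|i _]; [exact: HSbar_ge0 | exact: HSbar_le_PSbar].
Qed.

Lemma updim_ge a (A : set V) : measurable (A : set (Rn R n)) ->
  A `<=` Elow mu' a -> (0 < mu' A)%E -> (a%:E <= updimMB A)%E.
Proof.
move=> mA AE hA; apply: le_ereal_inf_tmp => _ [s [s0 hs] <-].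
have hHS : HS s A = 0%E.
  by apply/eqP; rewrite eq_le HS_ge0 andbT -hs HS_le_PS.
rewrite lee_fin leNgt; apply/negP => sa.
by move: hA; rewrite (low_null sa mA AE hHS) ltxx.
Qed.
End P12.

Unset Implicit Arguments.

Theorem lemma3p5 (R : realType) (n : nat) (mu : probability (Rn R n) R)
  (alpha q t delta : R) :
  compact (supp (mu : set 'rV[R]_n -> \bar R)) ->
  0 <= alpha -> 0 < delta -> delta <= alpha * q + t ->
  [/\
   (* (1)(a) *)
   (q <= 0 -> forall A : set (Rn R n), measurable A ->
      (A : set 'rV[R]_n) `<=` Eup mu alpha ->
      ((2 `^ (alpha * q - delta))%:E * Pqt mu q t A
         <= PS (alpha * q + t - delta) A)%E),
   (* (1)(b) *)
   (0 <= q ->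
      (forall A : set (Rn R n), measurable A ->
        (A : set 'rV[R]_n) `<=` Elow mu alpha ->
        ((2 `^ (alpha * q - delta))%:E * Pqt mu q t A
           <= PS (alpha * q + t - delta) A)%E) /\
      (forall A : set (Rn R n), measurable A ->
        (A : set 'rV[R]_n) `<=` Elow mu alpha -> (0 < mu A)%E ->
        (alpha%:E <= updimMB A)%E)),
   (* (2)(a) *)
   (q <= 0 -> forall A : set (Rn R n), measurable A ->
      (A : set 'rV[R]_n) `<=` Eup mu alpha ->
      ((2 `^ (alpha * q - delta))%:E * Hqt mu q t A
         <= HS (alpha * q + t - delta) A)%E) &
   (* (2)(b) *)
   (0 <= q ->
      (forall A : set (Rn R n), measurable A ->
        (A : set 'rV[R]_n) `<=` Elow mu alpha ->
        ((2 `^ (alpha * q - delta))%:E * Hqt mu q t A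
           <= HS (alpha * q + t - delta) A)%E) /\
      (forall A : set (Rn R n), measurable A ->
        (A : set 'rV[R]_n) `<=` Elow mu alpha -> (0 < mu A)%E ->
        (alpha%:E <= lowdimMB A)%E))].
Proof.
move=> _ a0 d0 hd.
have c0 : 0 <= 2 `^ (alpha * q - delta) by exact: powR_ge0.
have upcase (hq : q <= 0) : exists2 eta, 0 < eta & 0 < (alpha + eta) * q + t - (alpha * q + t - delta).
  exists (delta / (1 - q) / 2); first by rewrite divr_gt0// divr_gt0//; lra.
  have h1 : delta / (1 - q) / 2 * (1 - q) = delta / 2 by field; lra.
  set e := delta / (1 - q) / 2 in h1 *.
  have e0 : 0 < e by rewrite /e divr_gt0// divr_gt0//; lra.
  nra.
have lowcase (hq : 0 <= q) : exists2 eta, 0 < eta & 0 < (alpha - eta) * q + t - (alpha * q + t - delta).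
  exists (delta / (1 + q) / 2); first by rewrite divr_gt0// divr_gt0//; lra.
  have h1 : delta / (1 + q) / 2 * (1 + q) = delta / 2 by field; lra.
  set e := delta / (1 + q) / 2 in h1 *.
  have e0 : 0 < e by rewrite /e divr_gt0// divr_gt0//; lra.
  nra.
split.
- move=> hq A mA AE; have [eta eta0 hg] := upcase hq.
  exact: (P_ineq c0 (up_family hq eta0 AE) hg).
- move=> hq; have [eta eta0 hg] := lowcase hq; split.
  + move=> A mA AE; exact: (P_ineq c0 (low_family hq eta0 AE) hg).
  + move=> A mA AE hA; exact: (updim_ge mA AE hA).
- move=> hq A mA AE; have [eta eta0 hg] := upcase hq.
  exact: (H_ineq c0 (up_family hq eta0 AE) hg).
- move=> hq; have [eta eta0 hg] := lowcase hq; split.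
  + move=> A mA AE; exact: (H_ineq c0 (low_family hq eta0 AE) hg).
  + move=> A mA AE hA; exact: (lowdim_ge mA AE hA).
Qed.
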